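(* A nonnegative matrix $M$ with $\operatorname{rank}(M)\ge 2$ is a slack matrix of a polyhedral cone if and only if $M_{\mathrm{inc}}$ is an incidence matrix of some $\operatorname{rank}(M)$-dimensional pointed polyhedral cone.
   Context: A matrix $S\in\mathbb{R}^{p\times q}$ is a slack matrix of a polyhedral cone $K\subseteq\mathbb{R}^n$ if there are $A\in\mathbb{R}^{p\times n}$, $B\in\mathbb{R}^{n\times q}$ with $K=\{x\in\mathbb{R}^n: x^TB\ge 0\}=\{y^TA: y\in\mathbb{R}_+^p\}$ and $S=AB$. For a matrix $M$, $M_{\mathrm{inc}}$ is the $0/1$-matrix with $(M_{\mathrm{inc}})_{ij}=1$ iff $M_{ij}=0$. An incidence matrix of a polyhedral cone $K$ is a matrix $S_{\mathrm{inc}}$ for some slack matrix $S$ of $K$. A cone is pointed if its lineality space is $\{0\}$; its dimension is the dimension of its linear span. *)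

(* Defs.v *)
From HB Require Import structures.
From mathcomp Require Import all_boot all_order all_algebra.
From mathcomp Require Import reals.
Set Implicit Arguments. Unset Strict Implicit. Unset Printing Implicit Defensive.
Import Order.TTheory GRing.Theory Num.Theory.
Local Open Scope ring_scope.

Definition hrep (R : realType) (n q : nat) (B : 'M[R]_(n, q)) (x : 'rV[R]_n) : Prop :=
  forall j : 'I_q, 0 <= (x *m B) 0 j.

Definition vrep (R : realType) (p n : nat) (A : 'M[R]_(p, n)) (x : 'rV[R]_n) : Prop :=
  exists y : 'rV[R]_p, (forall i : 'I_p, 0 <= y 0 i) /\ x = y *m A.

Definition slack_matrix_of (R : realType) (n p q : nat) (K : 'rV[R]_n -> Prop)
  (S : 'M[R]_(p, q)) : Prop :=
  exists (A : 'M[R]_(p, n)) (B : 'M[R]_(n, q)),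
    (forall x, K x <-> hrep B x) /\ (forall x, K x <-> vrep A x) /\ S = A *m B.

Definition polyhedral_cone (R : realType) (n : nat) (K : 'rV[R]_n -> Prop) : Prop :=
  exists (p q : nat) (S : 'M[R]_(p, q)), slack_matrix_of K S.

Definition is_slack_matrix (R : realType) (p q : nat) (S : 'M[R]_(p, q)) : Prop :=
  exists (n : nat) (K : 'rV[R]_n -> Prop), slack_matrix_of K S.

Definition inc_mx (R : realType) (p q : nat) (M : 'M[R]_(p, q)) : 'M[R]_(p, q) :=
  \matrix_(i, j) (if M i j == 0 then 1 else 0).

Definition incidence_matrix_of (R : realType) (n p q : nat) (K : 'rV[R]_n -> Prop)
  (N : 'M[R]_(p, q)) : Prop :=
  exists S : 'M[R]_(p, q), slack_matrix_of K S /\ inc_mx S = N.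

Definition pointed (R : realType) (n : nat) (K : 'rV[R]_n -> Prop) : Prop :=
  forall x, K x -> K (- x) -> x = 0.

Definition cone_dim (R : realType) (n : nat) (K : 'rV[R]_n -> Prop) (d : nat) : Prop :=
  exists U : 'M[R]_n,
    (forall x, K x -> (x <= U)%MS) /\
    (forall V : 'M[R]_n, (forall x, K x -> (x <= V)%MS) -> (U <= V)%MS) /\
    \rank U = d.

(* Main.v *)
Require Import Defs.
From HB Require Import structures.
From mathcomp Require Import all_boot all_order all_algebra.
From mathcomp Require Import reals.
From Stdlib Require Import Classical.
From mathcomp Require Import zify lra.
Import Order.TTheory GRing.Theory Num.Theory.
Local Open Scope ring_scope.
Set Implicit Arguments. Unset Strict Implicit. Unset Printing Implicit Defensive.


Definition rnn (R : realType) n (x : 'rV[R]_n) := forall j, 0 <= x 0 j.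
Definition mnn (R : realType) m n (X : 'M[R]_(m, n)) := forall i j, 0 <= X i j.

Definition inst (R : realType) n p q (A : 'M[R]_(p, n)) (B : 'M[R]_(n, q)) : Prop :=
  [/\ (forall x : 'rV_n, rnn (x *m B) -> exists y : 'rV_p, rnn y /\ x = y *m A),
      (forall y : 'rV_p, rnn y -> rnn (y *m A *m B)),
      (forall x : 'rV_n, x *m B = 0 -> x = 0) &
      \rank A = n].

Definition patt (R : realType) p q (M S : 'M[R]_(p, q)) :=
  forall i j, (M i j == 0) = (S i j == 0).

Definition QQ (R : realType) p q (M : 'M[R]_(p, q)) :=
  forall w : 'rV_q, (w <= M)%MS -> rnn w -> exists y : 'rV_p, rnn y /\ w = y *m M.

Definition mu (R : realType) p q (S : 'M[R]_(p, q)) : nat :=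
  (#|[set i | row i S != 0%R]| + q)%N.

Lemma rnn_mul (R : realType) p q (y : 'rV[R]_p) (M : 'M[R]_(p, q)) :
  rnn y -> mnn M -> rnn (y *m M).
Proof.
move=> hy hM j; rewrite mxE; apply: sumr_ge0 => i _; exact: mulr_ge0.
Qed.

Lemma inst_S_nn (R : realType) n p q (A : 'M[R]_(p, n)) (B : 'M[R]_(n, q)) :
  inst A B -> mnn (A *m B).
Proof.
case=> _ h2 _ _ i j.
have := h2 (delta_mx 0 i) _.
have -> : (delta_mx 0 i : 'rV[R]_p) *m A *m B = row i (A *m B) by rewrite row_mul rowE.
- move=> H; have := H _ j; rewrite mxE; apply.
  by move=> k; rewrite mxE; case: (_ == _); case: (_ == _).
Qed.

Lemma row_full_ker (R : realType) p n (A : 'M[R]_(p, n)) (b : 'cV_n) :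
  \rank A = n -> A *m b = 0 -> b = 0.
Proof.
move=> hr hAb; have /row_fullP [X hX] : row_full A by rewrite /row_full hr.
by rewrite -[b]mul1mx -hX -mulmxA hAb mulmx0.
Qed.

Lemma rowb_sub (R : realType) m n (A : 'M[R]_(m, n)) : (row_base A <= A)%MS.
Proof. by rewrite eq_row_base. Qed.

Lemma exmin (R : realType) (q : nat) (f : 'I_q.+1 -> R) : exists j0, forall j, f j0 <= f j.
Proof.
exists [arg min_(j < ord0) f j]%O.
by case: arg_minP => // j _ H k; apply: H.
Qed.


Lemma mul_col' (R : realType) m n q (x : 'M[R]_(m, n)) (B : 'M[R]_(n, q.+1)) j :
  x *m col' j B = col' j (x *m B).
Proof. by rewrite !col'Esub mulmx_colsub. Qed.

Lemma rnn_col' (R : realType) q (x : 'rV[R]_q.+1) j : rnn x -> rnn (col' j x).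
Proof. by move=> h k; rewrite mxE. Qed.

Lemma rnn_of_col' (R : realType) q (x : 'rV[R]_q.+1) j :
  rnn (col' j x) -> 0 <= x 0 j -> rnn x.
Proof.
move=> h hj k; case: (unliftP j k) => [k' ->| ->] //.
by have := h k'; rewrite mxE.
Qed.

Definition red (R : realType) n q (B : 'M[R]_(n, q.+1)) (j : 'I_q.+1) :=
  forall x : 'rV_n, rnn (x *m col' j B) -> 0 <= (x *m B) 0 j.

Lemma oppE (R : realType) m n (X : 'M[R]_(m, n)) i j : (- X) i j = - X i j.
Proof. by rewrite mxE. Qed.

Lemma inst_col' (R : realType) n p q (A : 'M[R]_(p, n)) (B : 'M[R]_(n, q.+1)) j :
  inst A B -> red B j -> inst A (col' j B).
Proof.
case=> h1 h2 h3 h4 hr; split => //.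
- move=> x hx; apply: h1; apply: rnn_of_col' (hr _ hx); by rewrite -mul_col'.
- by move=> y hy; rewrite mul_col'; apply: rnn_col'; apply: h2.
- move=> x hx; apply: h3; apply/matrixP => i k; rewrite [i]ord1 [RHS]mxE.
  case: (unliftP j k) => [k' ->| ->].
    by move: hx; rewrite mul_col' => /matrixP/(_ 0 k'); rewrite !mxE.
  apply/eqP; rewrite eq_le; apply/andP; split.
    have : 0 <= (- x *m B) 0 j.
      by apply: hr; rewrite mulNmx hx oppr0 => l; rewrite mxE.
    by rewrite mulNmx oppE oppr_ge0.
  by apply: hr; rewrite hx => l; rewrite mxE.
Qed.

Lemma col'_1 (R : realType) m q (M : 'M[R]_(m, q.+1)) j :
  col' j M = M *m col' j 1%:M.
Proof. by rewrite mul_col' mulmx1. Qed.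

Lemma mu_col' (R : realType) p q (S : 'M[R]_(p, q.+1)) j :
  (mu (col' j S) < mu S)%N.
Proof.
rewrite /mu addnS ltnS leq_add2r; apply: subset_leq_card; apply/subsetP => i.
rewrite !inE; apply: contra => /eqP h; apply/eqP/matrixP => a b.
by move/matrixP: h => /(_ a (lift j b)); rewrite !mxE.
Qed.


Lemma sub_col0 (R : realType) m p q (v : 'M[R]_(m, q)) (M2 : 'M[R]_(p, q)) j0 :
  (forall i, M2 i j0 = 0) -> (v <= M2)%MS -> forall i, v i j0 = 0.
Proof.
move=> h /submxP [X ->] i; rewrite mxE big1 // => k _; by rewrite h mulr0.
Qed.

Lemma rank_step (R : realType) p q (M M2 : 'M[R]_(p, q)) j0 i1 :
  (M2 <= M)%MS -> (forall i, M2 i j0 = 0) -> M i1 j0 != 0 ->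
  \rank (M2 + row i1 M)%MS = (\rank M2).+1 /\ (\rank (M2 + row i1 M) <= \rank M)%N.
Proof.
move=> sM h hi; split; last first.
  by apply: mxrankS; rewrite addsmx_sub sM row_sub.
rewrite mxrank_disjoint_sum; last first.
  apply/eqP; rewrite -submx0; apply/row_subP => k; rewrite rowE.
  set v := _ *m _.
  have v1 : (v <= M2)%MS by apply: submx_trans (capmxSl _ _); exact: submxMl.
  have v2 : (v <= row i1 M)%MS by apply: submx_trans (capmxSr _ _); exact: submxMl.
  have z0 := sub_col0 h v1 0.
  case/submxP: v2 => Y hY.
  have hY0 : Y 0 0 = 0.
    move: z0; rewrite hY mxE big_ord1 mxE => /eqP; rewrite mulf_eq0 (negPf hi) orbF.
    by move/eqP.
  rewrite submx0 hY; apply/eqP/matrixP => a b; rewrite [a]ord1 !mxE big_ord1.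
  by rewrite [Y]mx11_scalar ?hY0 mxE /= mul0r.
rewrite rank_rV; suff -> : row i1 M != 0 by rewrite addn1.
by apply: contra hi => /eqP/matrixP/(_ 0 j0); rewrite !mxE => ->.
Qed.

Lemma step_sub (R : realType) p q (M M2 : 'M[R]_(p, q)) j0 i1 :
  (M2 <= M)%MS -> (forall i, M2 i j0 = 0) -> M i1 j0 != 0 ->
  (\rank M2).+1 = \rank M ->
  forall z : 'rV_q, (z <= M)%MS -> z 0 j0 = 0 -> (z <= M2)%MS.
Proof.
move=> sM h hi hr z zM z0.
have [e1 e2] := rank_step sM h hi.
have sub : (M2 + row i1 M <= M)%MS by rewrite addsmx_sub sM row_sub.
have : (M <= M2 + row i1 M)%MS.
  have := mxrank_leqif_sup sub; rewrite e1 hr => -[_]; move=> <-. by [].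
move=> sM'; have := submx_trans zM sM'.
case/sub_addsmxP => u hu.
have hu2 : u.2 0 0 = 0.
  move: z0; rewrite hu mxE (sub_col0 h (submxMl _ _)) add0r mxE big_ord1 mxE.
  by move/eqP; rewrite mulf_eq0 (negPf hi) orbF => /eqP.
rewrite hu; have -> : u.2 *m row i1 M = 0.
  apply/matrixP => a b; rewrite [a]ord1 !mxE big_ord1 [u.2]mx11_scalar hu2 !mxE /=.
  by rewrite mul0r.
by rewrite addr0 submxMl.
Qed.

Lemma col'_inj (R : realType) p q (M : 'M[R]_(p, q.+1)) j (v : 'rV_q.+1) :
  \rank (col' j M) = \rank M -> (v <= M)%MS -> col' j v = 0 -> v = 0.
Proof.
move=> hr vM hv.
have := mxrank_mul_ker M (col' j 1%:M); rewrite -col'_1 hr.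
move=> /eqP; rewrite -{2}[\rank M]addn0 eqn_add2l mxrank_eq0 => /eqP h0.
apply/eqP; rewrite -submx0 -h0 sub_capmx vM; apply/sub_kermxP.
by rewrite -col'_1.
Qed.


Definition dmask (R : realType) p q (S : 'M[R]_(p, q)) (j0 : 'I_q) : 'M[R]_p :=
  diag_mx (\row_i ((S i j0 == 0)%:R : R)).

Lemma dmaskE (R : realType) p q m (S : 'M[R]_(p, q)) j0 (X : 'M[R]_(p, m)) i j :
  (dmask S j0 *m X) i j = (S i j0 == 0)%:R * X i j.
Proof. by rewrite /dmask mul_diag_mx !mxE. Qed.

Lemma dmask_col0 (R : realType) p q (S : 'M[R]_(p, q)) j0 i :
  (dmask S j0 *m S) i j0 = 0.
Proof. by rewrite dmaskE; case: eqP => [->|]; rewrite ?mulr0 ?mul0r. Qed.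

Lemma dmask_nn (R : realType) p q m (S : 'M[R]_(p, q)) j0 (X : 'M[R]_(p, m)) :
  mnn X -> mnn (dmask S j0 *m X).
Proof. by move=> h i j; rewrite dmaskE; apply: mulr_ge0 => //; case: eqP. Qed.

Lemma dmaskEr (R : realType) p q (S : 'M[R]_(p, q)) j0 (y : 'rV[R]_p) b :
  (y *m dmask S j0) 0 b = y 0 b * (S b j0 == 0)%:R.
Proof. by rewrite /dmask mul_mx_diag !mxE. Qed.

Lemma rnn_dmask (R : realType) p q (S : 'M[R]_(p, q)) j0 (y : 'rV[R]_p) :
  rnn y -> rnn (y *m dmask S j0).
Proof.
move=> h j; rewrite /dmask mul_mx_diag !mxE; apply: mulr_ge0 => //; by case: eqP.
Qed.

Lemma face_lemma (R : realType) n p q (A : 'M[R]_(p, n)) (B : 'M[R]_(n, q)) j0 :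
  inst A B -> forall x : 'rV_n, rnn (x *m B) -> (x *m B) 0 j0 = 0 ->
  exists y, rnn y /\ x = y *m (dmask (A *m B) j0 *m A).
Proof.
move=> hI x hx h0; have SN := inst_S_nn hI; set S := A *m B in SN *.
case: hI => h1 _ _ _; have [y [hy hxy]] := h1 x hx; subst x.
exists y; split => //; rewrite mulmxA; congr (_ *m _).
move: h0; rewrite -mulmxA mxE => h0.
have hz := psumr_eq0P (fun i _ => mulr_ge0 (hy i) (SN i j0)) h0.
apply/matrixP => a b; rewrite [a]ord1 dmaskEr.
case: eqP => [_|/eqP hne]; first by rewrite mulr1.
have := hz b isT; move/eqP; rewrite mulf_eq0 (negPf hne) orbF => /eqP ->.
by rewrite mul0r.
Qed.

Lemma AIB0 (R : realType) n p q (A : 'M[R]_(p, n)) (B : 'M[R]_(n, q)) j0 i :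
  (dmask (A *m B) j0 *m A *m B) i j0 = 0.
Proof. by rewrite -mulmxA dmask_col0. Qed.


Lemma addE (R : realType) m n (X Y : 'M[R]_(m, n)) i j : (X + Y) i j = X i j + Y i j.
Proof. by rewrite mxE. Qed.
Lemma scaleE (R : realType) m n a (X : 'M[R]_(m, n)) i j : (a *: X) i j = a * X i j.
Proof. by rewrite mxE. Qed.

Lemma colentry (R : realType) m n q (X : 'M[R]_(m, n)) (B : 'M[R]_(n, q)) j i :
  (X *m (B *m delta_mx j (0 : 'I_1))) i 0 = (X *m B) i j.
Proof. by rewrite mulmxA -colE mxE. Qed.

Lemma col_zero (R : realType) n p q (A : 'M[R]_(p, n)) (B : 'M[R]_(n, q)) j :
  \rank A = n -> (forall i, (A *m B) i j = 0) -> forall x : 'rV_n, (x *m B) 0 j = 0.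
Proof.
move=> hr h x.
have hb : B *m delta_mx j (0 : 'I_1) = 0.
  apply: (row_full_ker hr); apply/matrixP => a b; rewrite [b]ord1 colentry h mxE //.
by rewrite -colentry hb mulmx0 mxE.
Qed.

Lemma sum_col_pos (R : realType) p q (S : 'M[R]_(p, q)) j :
  mnn S -> ((const_mx 1 : 'rV_p) *m S) 0 j = 0 -> forall i, S i j = 0.
Proof.
move=> hS; rewrite mxE => h i.
have e : \sum_k (const_mx 1 : 'rV[R]_p) 0 k * S k j = \sum_k S k j.
  by apply: eq_bigr => k _; rewrite mxE mul1r.
rewrite e in h.
by apply: (psumr_eq0P (fun k _ => hS k j) h).
Qed.

Lemma facet_rank (R : realType) n p q (A : 'M[R]_(p, n)) (B : 'M[R]_(n, q.+1)) j0
  (x0 : 'rV_n) :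
  inst A B -> rnn (x0 *m col' j0 B) -> (x0 *m B) 0 j0 < 0 ->
  (n <= (\rank (dmask (A *m B) j0 *m A)).+1)%N.
Proof.
move=> hI hx0 hb.
have SN := inst_S_nn hI.
have [h1 h2 h3 h4] := hI.
set AI := dmask (A *m B) j0 *m A.
pose c : 'rV_n := const_mx 1 *m A.
have cBE : c *m B = (const_mx 1 : 'rV_p) *m (A *m B) by rewrite mulmxA.
have cBnn : rnn (c *m B) by rewrite cBE; apply: rnn_mul => // k; rewrite mxE.
set al := (c *m B) 0 j0.
set be := (x0 *m B) 0 j0.
have alpos : 0 < al.
  rewrite lt_def cBnn andbT; apply/eqP => hal.
  have hz : forall i, (A *m B) i j0 = 0 by apply: sum_col_pos SN _; rewrite -cBE.
  by have e := col_zero h4 hz x0; move: hb; rewrite e ltxx.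
pose pp : 'rV_n := al *: x0 - be *: c.
have ppE : forall j, (pp *m B) 0 j = al * (x0 *m B) 0 j - be * (c *m B) 0 j.
  by move=> j; rewrite mulmxBl -!scalemxAl addE oppE !scaleE.
have x0nn : forall j, j != j0 -> 0 <= (x0 *m B) 0 j.
  move=> j; case: (unliftP j0 j) => [k ->|->]; last by rewrite eqxx.
  by move=> _; have := hx0 k; rewrite mul_col' mxE.
have ppnn : rnn (pp *m B).
  move=> j; rewrite ppE; case: (eqVneq j j0) => [->|hj].
    by rewrite /be /al mulrC subrr.
  rewrite -mulNr; apply: addr_ge0; first by apply: mulr_ge0; [exact: ltW|exact: x0nn].
  by apply: mulr_ge0; [rewrite oppr_ge0; exact: ltW|exact: cBnn].
have pp0 : (pp *m B) 0 j0 = 0 by rewrite ppE /be /al mulrC subrr.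
have ppz : forall j, j != j0 -> (pp *m B) 0 j = 0 -> forall x : 'rV_n, (x *m B) 0 j = 0.
  move=> j hj; rewrite ppE -mulNr => /eqP.
  rewrite paddr_eq0; last 2 first.
  - by apply: mulr_ge0; [exact: ltW|exact: x0nn].
  - by apply: mulr_ge0; [rewrite oppr_ge0; exact: ltW|exact: cBnn].
  case/andP=> _; rewrite mulf_eq0 oppr_eq0 (negPf (ltr0_neq0 hb)) /=.
  move=> /eqP hc.
  have hz : forall i, (A *m B) i j = 0 by apply: sum_col_pos SN _; rewrite -cBE.
  exact: col_zero h4 hz.
have key : forall v : 'rV_n, (v *m B) 0 j0 = 0 -> (v <= AI)%MS.
  move=> v hv0.
  pose N := \sum_j `|(v *m B) 0 j| / (pp *m B) 0 j.
  have hN : forall j, `|(v *m B) 0 j| / (pp *m B) 0 j <= N.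
    move=> j; rewrite /N (bigD1 j) //= lerDl; apply: sumr_ge0 => k _.
    by apply: divr_ge0; [exact: normr_ge0|exact: ppnn].
  have Knn : rnn ((N *: pp + v) *m B).
    move=> j; rewrite mulmxDl -scalemxAl addE scaleE.
    have [hp|hp] := eqVneq ((pp *m B) 0 j) 0.
      rewrite hp mulr0 add0r; case: (eqVneq j j0) => [->|hj]; first by rewrite hv0.
      by rewrite (ppz j hj hp v).
    have hpp : 0 < (pp *m B) 0 j by rewrite lt_def hp ppnn.
    have := hN j; rewrite ler_pdivrMr // => h.
    have : - (v *m B) 0 j <= `|(v *m B) 0 j| by rewrite ler_normr lexx orbT.
    move=> h'; lra.
  have K0 : ((N *: pp + v) *m B) 0 j0 = 0.
    by rewrite mulmxDl -scalemxAl addE scaleE pp0 mulr0 add0r hv0.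
  have [y [_ hy]] := face_lemma hI Knn K0.
  have [y' [_ hy']] := face_lemma hI ppnn pp0.
  have -> : v = (N *: pp + v) + (- N) *: pp by rewrite scaleNr addrC addKr.
  apply: addmx_sub; first by rewrite hy submxMl.
  by apply: scalemx_sub; rewrite hy' submxMl.
have kerS : (kermx (B *m delta_mx j0 (0 : 'I_1)) <= AI)%MS.
  apply/row_subP => k; apply: key; rewrite -colentry -row_mul mulmx_ker.
  by rewrite linear0 mxE.
have := mxrankS kerS; rewrite mxrank_ker.
have := rank_leq_col (B *m delta_mx j0 (0 : 'I_1)).
move: (\rank (B *m _)) => r hr1 hk; lia.
Qed.


Lemma facet_S (R : realType) n p q (A : 'M[R]_(p, n)) (B : 'M[R]_(n, q)) j0 :
  col_base (dmask (A *m B) j0 *m A) *m (row_base (dmask (A *m B) j0 *m A) *m B)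
  = dmask (A *m B) j0 *m (A *m B).
Proof. by rewrite mulmxA mulmx_base mulmxA. Qed.

Lemma facet_inst (R : realType) n p q (A : 'M[R]_(p, n)) (B : 'M[R]_(n, q)) j0 :
  inst A B ->
  inst (col_base (dmask (A *m B) j0 *m A)) (row_base (dmask (A *m B) j0 *m A) *m B).
Proof.
move=> hI; have [h1 h2 h3 h4] := hI.
set AI := dmask (A *m B) j0 *m A.
have rf := row_base_free AI.
split.
- move=> x2 hx2; set x := x2 *m row_base AI.
  have hxB : rnn (x *m B) by rewrite /x -mulmxA.
  have hx0 : (x *m B) 0 j0 = 0.
    have /submxP [X hX] := rowb_sub AI.
    apply: (sub_col0 (M2 := AI *m B)) => [i|]; first exact: AIB0.
    by rewrite /x hX -!mulmxA mulmxA; apply: submxMl.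
  have [y [hy hxy]] := face_lemma hI hxB hx0.
  exists y; split => //; apply: (row_free_inj rf).
  by rewrite -/x hxy -mulmxA mulmx_base.
- move=> y hy; rewrite mulmxA -(mulmxA y) mulmx_base /AI !mulmxA.
  by apply: h2; apply: rnn_dmask.
- move=> x2 hx2; apply: (row_free_inj rf); rewrite mul0mx; apply: h3.
  by rewrite -mulmxA.
- by apply/eqP; apply: col_base_full.
Qed.

Lemma patt_mask (R : realType) p q (M S : 'M[R]_(p, q)) j0 :
  patt M S -> patt (dmask S j0 *m M) (dmask S j0 *m S).
Proof.
move=> hP; rewrite /patt => i j; rewrite !dmaskE; case: (S i j0 == 0); rewrite ?mul1r ?mul0r ?eqxx //; exact: hP.
Qed.

Lemma mask_col0 (R : realType) p q (M S : 'M[R]_(p, q)) j0 :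
  patt M S -> forall i, (dmask S j0 *m M) i j0 = 0.
Proof.
move=> hP i; rewrite dmaskE; case: eqP => [h|_]; last by rewrite mul0r.
by have := hP i j0; rewrite h eqxx => /eqP ->; rewrite mulr0.
Qed.

Lemma rowEnt (R : realType) p q (X : 'M[R]_(p, q)) i b : (row i X) 0 b = X i b.
Proof. by rewrite mxE. Qed.

Lemma mu_mask (R : realType) p q (S : 'M[R]_(p, q)) j0 i1 :
  S i1 j0 != 0 -> (mu (dmask S j0 *m S) < mu S)%N.
Proof.
move=> hi; rewrite /mu ltn_add2r; apply: proper_card; apply/properP; split.
  apply/subsetP => i; rewrite !inE; apply: contra => /eqP h.
  apply/eqP/matrixP => a b; rewrite [a]ord1 rowEnt [RHS]mxE dmaskE.
  by move/matrixP: h => /(_ 0 b); rewrite rowEnt [RHS]mxE => ->; rewrite mulr0.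
exists i1; rewrite !inE.
  by apply: contra hi => /eqP/matrixP/(_ 0 j0); rewrite rowEnt [RHS]mxE => ->.
rewrite negbK; apply/eqP/matrixP => a b; rewrite [a]ord1 rowEnt [RHS]mxE dmaskE (negPf hi).
by rewrite mul0r.
Qed.

Lemma irred_witness (R : realType) n q (B : 'M[R]_(n, q.+1)) j :
  ~ red B j -> exists x0 : 'rV_n, rnn (x0 *m col' j B) /\ (x0 *m B) 0 j < 0.
Proof.
move=> h; apply: NNPP => hn; apply: h => x hx.
case: (lerP 0 ((x *m B) 0 j)) => // hlt.
by exfalso; apply: hn; exists x.
Qed.

Lemma col_nz (R : realType) n p q (A : 'M[R]_(p, n)) (B : 'M[R]_(n, q)) j (x0 : 'rV_n) :
  \rank A = n -> (x0 *m B) 0 j != 0 -> exists i1, (A *m B) i1 j != 0.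
Proof.
move=> hr hx; apply: NNPP => hn; move: hx; rewrite (col_zero hr) ?eqxx // => i.
by apply/eqP; apply: negbNE; apply/negP => hi; apply: hn; exists i.
Qed.

Lemma n0_of_q0 (R : realType) n p (A : 'M[R]_(p, n)) (B : 'M[R]_(n, 0)) :
  inst A B -> n = 0%N.
Proof.
case=> _ _ h3 _; case: n A B h3 => // n A B h3.
have := h3 (const_mx 1) (thinmx0 _) => /matrixP/(_ 0 ord0); rewrite !mxE => /eqP.
by rewrite oner_eq0.
Qed.

Lemma col'E (R : realType) p q (X : 'M[R]_(p, q.+1)) j i k : (col' j X) i k = X i (lift j k).
Proof. by rewrite mxE. Qed.

Lemma L_aux (R : realType) N : forall n p q (A : 'M[R]_(p, n)) (B : 'M[R]_(n, q)) (M : 'M[R]_(p, q)),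
  (mu (A *m B) < N)%N -> inst A B -> patt M (A *m B) -> (n <= \rank M)%N.
Proof.
elim: N => // N IH n p q A B M hmu hI hP.
case: q B M hmu hI hP => [|q] B M hmu hI hP.
  by rewrite (n0_of_q0 hI).
have [h1 h2 h3 h4] := hI.
case: (classic (exists j, red B j)) => [[j hr]|hnr].
  have hI' := inst_col' hI hr.
  have hP' : patt (col' j M) (A *m col' j B).
    by rewrite /patt => i k; rewrite mul_col' !col'E; apply: hP.
  have hmu' : (mu (A *m col' j B) < N)%N.
    by rewrite mul_col'; apply: leq_trans (mu_col' _ _) _.
  have := IH _ _ _ _ _ _ hmu' hI' hP'.
  move=> h; apply: leq_trans h _; rewrite col'_1; exact: mxrankM_maxl.
have [x0 [hx0 hb]] : exists x0 : 'rV_n, rnn (x0 *m col' ord0 B) /\ (x0 *m B) 0 ord0 < 0.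
  by apply: irred_witness => hr; apply: hnr; exists ord0.
have [i1 hi1] := col_nz h4 (ltr0_neq0 hb).
have hM1 : M i1 ord0 != 0 by rewrite hP.
set S := A *m B in hP hmu hi1.
set AI := dmask S ord0 *m A.
have hIf := facet_inst ord0 hI.
have hPf : patt (dmask S ord0 *m M) (col_base AI *m (row_base AI *m B)).
  by rewrite facet_S; apply: patt_mask.
have hmuf : (mu (col_base AI *m (row_base AI *m B)) < N)%N.
  by rewrite facet_S; apply: leq_trans (mu_mask hi1) _.
have r1 := IH _ _ _ _ _ _ hmuf hIf hPf.
have [e1 e2] := rank_step (submxMl (dmask S ord0) M) (mask_col0 ord0 hP) hM1.
have r2 := facet_rank hI hx0 hb.
rewrite -/S -/AI in r2.
apply: leq_trans r2 _; apply: leq_trans _ e2; rewrite e1 ltnS; exact: r1.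
Qed.


Lemma L_main (R : realType) n p q (A : 'M[R]_(p, n)) (B : 'M[R]_(n, q)) (M : 'M[R]_(p, q)) :
  inst A B -> patt M (A *m B) -> (n <= \rank M)%N.
Proof. exact: (@L_aux R (mu (A *m B)).+1). Qed.

Lemma T_aux (R : realType) N : forall n p q (A : 'M[R]_(p, n)) (B : 'M[R]_(n, q)) (M : 'M[R]_(p, q)),
  (mu (A *m B) < N)%N -> inst A B -> patt M (A *m B) -> mnn M -> \rank M = n -> QQ M.
Proof.
elim: N => // N IH n p q A B M hmu hI hP hM hrk.
case: q B M hmu hI hP hM hrk => [|q] B M hmu hI hP hM hrk.
  move=> w _ _; exists 0; split; first by move=> j; rewrite mxE.
  by rewrite [w]thinmx0 [RHS]thinmx0.
have [h1 h2 h3 h4] := hI.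
case: (classic (exists j, red B j)) => [[j hr]|hnr].
  have hI' := inst_col' hI hr.
  have hP' : patt (col' j M) (A *m col' j B).
    by rewrite /patt => i k; rewrite mul_col' !col'E; apply: hP.
  have hmu' : (mu (A *m col' j B) < N)%N.
    by rewrite mul_col'; apply: leq_trans (mu_col' _ _) _.
  have hrk' : \rank (col' j M) = n.
    apply/eqP; rewrite eqn_leq (L_main hI' hP') andbT -hrk col'_1; exact: mxrankM_maxl.
  have hM' : mnn (col' j M) by move=> i k; rewrite col'E.
  have hQ := IH _ _ _ _ _ _ hmu' hI' hP' hM' hrk'.
  move=> w wM wn.
  have wM' : (col' j w <= col' j M)%MS by rewrite (col'_1 w) (col'_1 M); apply: submxMr.
  have [y [hy hw]] := hQ _ wM' (rnn_col' j wn).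
  exists y; split => //.
  case/submxP: wM => X hX.
  apply/eqP; rewrite -subr_eq0; apply/eqP.
  apply: (col'_inj (M := M) (j := j)); first by rewrite hrk'.
    by rewrite hX -mulmxBl; apply: submxMl.
  by rewrite col'_1 mulmxBl -!col'_1 hw mul_col' subrr.
set S := A *m B in hP hmu.
have witn : forall j, exists x0 : 'rV_n, rnn (x0 *m col' j B) /\ (x0 *m B) 0 j < 0.
  by move=> j; apply: irred_witness => hr; apply: hnr; exists j.
pose u : 'rV_q.+1 := const_mx 1 *m M.
have upos : forall j, 0 < u 0 j.
  move=> j; rewrite lt_def; apply/andP; split; last first.
    by apply: rnn_mul => // k; rewrite mxE.
  apply/eqP => hu.
  have hz : forall i, S i j = 0.
    move=> i; apply/eqP; rewrite -hP; apply/eqP; exact: (sum_col_pos hM hu).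
  have [x0 [_ hb]] := witn j.
  by move: hb; rewrite (col_zero h4 hz) ltxx.
move=> w wM wn.
have [j0 hj0] := exmin (fun j => w 0 j / u 0 j).
pose t := w 0 j0 / u 0 j0.
have t0 : 0 <= t by apply: divr_ge0; [exact: wn|exact: ltW].
pose z := w - t *: u.
have zn : rnn z.
  move=> j; rewrite addE oppE scaleE subr_ge0.
  by have := hj0 j; rewrite -/t ler_pdivlMr.
have z0 : z 0 j0 = 0.
  by rewrite addE oppE scaleE /t divfK ?subrr // lt0r_neq0.
have zM : (z <= M)%MS.
  by apply: addmx_sub => //; rewrite -scaleN1r; apply: scalemx_sub; apply: scalemx_sub; apply: submxMl.
have [x0 [hx0 hb]] := witn j0.
have [i1 hi1] := col_nz h4 (ltr0_neq0 hb).
have hM1 : M i1 j0 != 0 by rewrite hP.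
set AI := dmask S j0 *m A.
have hIf := facet_inst j0 hI.
have hPf : patt (dmask S j0 *m M) (col_base AI *m (row_base AI *m B)).
  by rewrite facet_S; apply: patt_mask.
have hmuf : (mu (col_base AI *m (row_base AI *m B)) < N)%N.
  by rewrite facet_S; apply: leq_trans (mu_mask hi1) _.
have r1 := L_main hIf hPf.
have [e1 e2] := rank_step (submxMl (dmask S j0) M) (mask_col0 j0 hP) hM1.
have r2 := facet_rank hI hx0 hb.
rewrite -/S -/AI in r2.
have hrkf : \rank (dmask S j0 *m M) = \rank AI.
  apply/eqP; rewrite eqn_leq r1 andbT -ltnS.
  by apply: leq_trans r2; rewrite -hrk -e1.
have hrk1 : (\rank (dmask S j0 *m M)).+1 = \rank M.
  apply/eqP; rewrite eqn_leq -e1 e2 /= hrk e1 hrkf; exact: r2.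
have hQ := IH _ _ _ _ _ _ hmuf hIf hPf (dmask_nn S j0 hM) hrkf.
have zM2 := step_sub (submxMl (dmask S j0) M) (mask_col0 j0 hP) hM1 hrk1 zM z0.
have [y' [hy' hz]] := hQ _ zM2 zn.
exists (y' *m dmask S j0 + t *: const_mx 1); split.
  move=> j; rewrite addE scaleE [X in t * X]mxE mulr1; apply: addr_ge0 => //.
  exact: rnn_dmask.
rewrite mulmxDl -scalemxAl -mulmxA -hz /z -/u.
by rewrite subrK.
Qed.


Lemma Q_of_slack (R : realType) n p q (K : 'rV[R]_n -> Prop) (M : 'M[R]_(p, q)) :
  slack_matrix_of K M -> QQ M.
Proof.
case=> A [B [hH [hV ->]]] w /submxP [X ->] wn.
have : K (X *m A) by apply/hH; move=> j; rewrite -mulmxA; exact: wn.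
move/hV => [y [hy e]]; exists y; split => //; by rewrite !mulmxA e.
Qed.

Lemma slack_of_Q (R : realType) p q (M : 'M[R]_(p, q)) :
  mnn M -> QQ M -> slack_matrix_of (vrep (col_base M)) M.
Proof.
move=> hM hQ; exists (col_base M), (row_base M); split; last split.
- move=> x; split.
  + case=> y [hy ->] j; rewrite -mulmxA mulmx_base; exact: rnn_mul.
  + move=> hx; have wM : (x *m row_base M <= M)%MS.
      by apply: submx_trans (submxMl _ _) (rowb_sub M).
    have [y [hy hw]] := hQ _ wM hx.
    exists y; split => //; apply: (row_free_inj (row_base_free M)).
    by rewrite hw -mulmxA mulmx_base.
- by [].
- by rewrite mulmx_base.
Qed.

Lemma main_fwd (R : realType) p q (M : 'M[R]_(p, q)) :
  mnn M -> QQ M ->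
  exists (n : nat) (K : 'rV[R]_n -> Prop),
     polyhedral_cone K /\ pointed K /\ cone_dim K (\rank M) /\
     incidence_matrix_of K (inc_mx M).
Proof.
move=> hM hQ; have hS := slack_of_Q hM hQ.
exists (\rank M), (vrep (col_base M)); split; last split; last split.
- by exists p, q, M.
- move=> x hx hnx.
  have hh : forall y, vrep (col_base M) y -> rnn (y *m row_base M).
    case: hS => A [B [hH [hV e]]] y hy.
    case: hy => z [hz ->] j; rewrite -mulmxA mulmx_base; exact: rnn_mul.
  have h1 := hh _ hx; have h2 := hh _ hnx.
  apply: (row_free_inj (row_base_free M)); rewrite mul0mx.
  apply/matrixP => a b; rewrite [a]ord1 [RHS]mxE; apply/eqP; rewrite eq_le (h1 b) andbT.
  by have := h2 b; rewrite mulNmx oppE oppr_ge0.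
- exists 1%:M; split; last split.
  + by move=> x _; apply: submx1.
  + move=> V hV; apply: submx_trans (submx_full _ (col_base_full M)) _.
    apply/row_subP => i; apply: hV; exists (delta_mx 0 i); split; last by rewrite rowE.
    by move=> k; rewrite mxE; case: (_ == _); case: (_ == _).
  + exact: mxrank1.
- by exists M.
Qed.

Lemma patt_of_inc (R : realType) p q (M S : 'M[R]_(p, q)) :
  inc_mx S = inc_mx M -> patt M S.
Proof.
move=> /matrixP h; rewrite /patt => i j; have := h i j; rewrite !mxE.
by case: (M i j == 0); case: (S i j == 0) => // /eqP; rewrite ?oner_eq0 // eq_sym oner_eq0.
Qed.

Lemma main_bwd (R : realType) p q (M : 'M[R]_(p, q)) n (K : 'rV[R]_n -> Prop) :
  mnn M -> pointed K -> cone_dim K (\rank M) -> incidence_matrix_of K (inc_mx M) -> QQ M.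
Proof.
move=> hM hpt [U [hU1 [hU2 hU3]]] [S [[A [B [hH [hV hSe]]]] hinc]].
have hP := patt_of_inc hinc; rewrite hSe in hP.
have Arow : forall y : 'rV_p, rnn y -> K (y *m A) by move=> y hy; apply/hV; exists y.
have rkA : \rank A = \rank M.
  rewrite -hU3; apply/eqP; rewrite eqn_leq; apply/andP; split.
    apply: mxrankS; apply/row_subP => i; rewrite rowE; apply: hU1; apply: Arow.
    by move=> k; rewrite mxE; case: (_ == _); case: (_ == _).
  rewrite -(mxrank_gen A); apply: mxrankS; apply: hU2 => x /hV [y [_ ->]].
  by rewrite genmxE submxMl.
pose A1 := col_base A; pose E := row_base A; pose B1 := E *m B.
have hI : inst A1 B1.
  have rf := row_base_free A.
  split.
  - move=> x1 hx1; have : K (x1 *m E) by apply/hH => j; rewrite -mulmxA; exact: hx1.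
    move/hV => [y [hy hxy]]; exists y; split => //; apply: (row_free_inj rf).
    by rewrite -/E hxy -mulmxA mulmx_base.
  - move=> y hy; rewrite /B1 mulmxA -(mulmxA y) mulmx_base.
    by apply/hH; apply: Arow.
  - move=> x1 hx1; apply: (row_free_inj rf); rewrite mul0mx; apply: hpt.
    + by apply/hH => j; rewrite -mulmxA hx1 mxE.
    + by apply/hH => j; rewrite mulNmx -mulmxA hx1 oppr0 mxE.
  - by apply/eqP; apply: col_base_full.
have hP1 : patt M (A1 *m B1) by rewrite /B1 mulmxA mulmx_base.
exact: (@T_aux R (mu (A1 *m B1)).+1 _ _ _ A1 B1 M (ltnSn _) hI hP1 hM (esym rkA)).
Qed.

Unset Implicit Arguments.

Theorem theorem4p3 (R : realType) (p q : nat) (M : 'M[R]_(p, q)) :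
  (forall i j, 0 <= M i j) -> (2 <= \rank M)%N ->
  (is_slack_matrix M <->
   exists (n : nat) (K : 'rV[R]_n -> Prop),
     polyhedral_cone K /\ pointed K /\ cone_dim K (\rank M) /\
     incidence_matrix_of K (inc_mx M)).
Proof.
move=> hM _; split.
  case=> n [K hK]; exact: main_fwd hM (Q_of_slack hK).
case=> n [K [_ [hpt [hd hinc]]]].
exists (\rank M), (vrep (col_base M)); apply: slack_of_Q => //.
exact: main_bwd hM hpt hd hinc.
Qed.
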